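(* Let $X$ be a compact topological space, let $D\subseteq X$, let $\overline{D}$ be the closure of $D$ in $X$, and put $\partial D:=\overline{D}\setminus D$. Let $Y$ be a Hausdorff topological space and let $f\colon\overline{D}\to Y$ be a continuous map such that $f(D)$ is open in $Y$. For each $y\in Y\setminus f(\partial D)$, let $E_y$ denote the connected component of $y$ in $Y\setminus f(\partial D)$. Then $$f(\overline{D})\subseteq Y\setminus \bigcup_{y\in Y\setminus f(\overline{D})}E_y .$$
   Context: Note that $\partial D$ is defined as $\overline{D}\setminus D$; complements are taken in $Y$. *)

(* Defs.v *)
From mathcomp Require Import all_boot all_algebra.
From mathcomp Require Import all_classical all_reals all_analysis.
Set Implicit Arguments. Unset Strict Implicit. Unset Printing Implicit Defensive.

(* Main.v *)
Require Import Defs.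
From mathcomp Require Import all_boot all_algebra.
From mathcomp Require Import all_classical all_reals all_analysis.
Local Open Scope classical_set_scope.

Theorem mainTheorem2 (X Y : topologicalType) (D : set X) (f : X -> Y) :
  compact [set: X] ->
  hausdorff_space Y ->
  {within closure D, continuous f} ->
  open (f @` D) ->
  f @` closure D `<=`
    ~` \bigcup_(y in ~` (f @` closure D))
          connected_component (~` (f @` (closure D `\` D))) y.
Proof.
move=> cX hY cf oD z zD [y ny [C [Cy CA cC] Cz]].
have cl : closed (f @` closure D).
  apply: compact_closed => //; apply: continuous_compact => //.
  exact: (subclosed_compact (@closed_closure _ D) cX).
have key : forall w, C w -> (f @` closure D) w -> (f @` D) w.
  move=> w Cw [x xD fxw]; subst w; have H := CA _ Cw.
  have [xD'|nxD] := pselect (D x); first by exists x.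
  by exfalso; apply: H; exists x => //; split.
have sub : f @` D `<=` f @` closure D.
  by move=> w [x xD <-]; exists x => //; exact: subset_closure.
have E : C `&` f @` D = C.
  apply: cC.
  - by exists z; split => //; exact: key.
  - by exists (f @` D).
  - exists (f @` closure D) => //; apply/seteqP; split => w [Cw Hw]; split => //.
    + exact: sub.
    + exact: key.
have : (C `&` f @` D) y by rewrite E.
by move=> [_ /sub].
Qed.
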